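(* Let $r\ge 0$, $t>0$, $\phi,b\in\mathbb{R}$ and $f(\theta)=-r\cos(2\theta t-\phi)+b$, with derivative $f'(\theta)=2rt\sin(2\theta t-\phi)$. Define the curvature function $$w(\theta)=\begin{cases}\dfrac{f'(\theta)}{\mathrm{mod}\!\big(\theta-\frac{\phi}{2t}+\frac{\pi}{2t},\frac{2\pi}{2t}\big)-\frac{\pi}{2t}} & \theta\notin\{\frac{\phi+2\pi m}{2t}:m\in\mathbb{Z}\},\\ 4t^2r & \theta\in\{\frac{\phi+2\pi m}{2t}:m\in\mathbb{Z}\},\end{cases}$$ where a $0/0$ (denominator equal to $0$, which forces $f'(\theta)=0$) is replaced by... — more precisely, whenever the denominator is nonzero use the quotient. Then for every $\theta'\in\mathbb{R}$ for which the denominator is nonzero or $\theta'\in\{\frac{\phi+2\pi m}{2t}\}$, the quadratic $$q(\theta;\theta')=f(\theta')+f'(\theta')(\theta-\theta')+\tfrac12 w(\theta')(\theta-\theta')^2$$ satisfies $q(\theta';\theta')=f(\theta')$ and $q(\theta;\theta')\ge f(\theta)$ for all $\theta\in\mathbb{R}$. Consequently, for $f_i(\theta)=-r_i\cos(2\theta t_i-\phi_i)+b_i$ ($i=1,\dots,T$, $r_i\ge0$, $t_i>0$) with corresponding $w_i$, if $\sum_iw_i(\theta')>0$ then $\theta^+=\theta'-\sum_if_i'(\theta')/\sum_iw_i(\theta')$ satisfies $\sum_if_i(\theta^+)\le\sum_if_i(\theta')$.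
   Context: For $a\in\mathbb{R}$, $p>0$, $\mathrm{mod}(a,p)=a-p\lfloor a/p\rfloor\in[0,p)$. The denominator in the first case of $w$ vanishes exactly when $\theta\in\{\frac{\phi+\pi+2\pi m}{2t}:m\in\mathbb{Z}\}$ (the maximizers of $f$), where $f'=0$; these points are excluded from the claim. *)

(* Defs.v *)
From Stdlib Require Import Reals Lra List ClassicalDescription.
Open Scope R_scope.

(* mod(a,p) = a - p * floor(a/p); Int_part x = floor x *)
Definition Rmod (a p : R) : R := a - p * IZR (Int_part (a / p)).

Definition fcos (r t phi b theta : R) : R := - r * cos (2 * theta * t - phi) + b.

Definition fcos' (r t phi theta : R) : R := 2 * r * t * sin (2 * theta * t - phi).

Definition in_minset (t phi theta : R) : Prop :=
  exists m : Z, theta = (phi + 2 * PI * IZR m) / (2 * t).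

Definition wden (t phi theta : R) : R :=
  Rmod (theta - phi / (2 * t) + PI / (2 * t)) (2 * PI / (2 * t)) - PI / (2 * t).

Definition wcurv (r t phi theta : R) : R :=
  if excluded_middle_informative (in_minset t phi theta)
  then 4 * t ^ 2 * r
  else fcos' r t phi theta / wden t phi theta.

Definition qmaj (r t phi b theta' theta : R) : R :=
  fcos r t phi b theta' + fcos' r t phi theta' * (theta - theta')
  + / 2 * wcurv r t phi theta' * (theta - theta') ^ 2.

Definition sumR (T : nat) (g : nat -> R) : R := fold_right Rplus 0 (map g (seq 0 T)).

(* Main.v *)
Require Import Defs.
From Stdlib Require Import Reals ClassicalDescription.
From Stdlib Require Import Reals Lra Lia List ZArith.
From Coquelicot Require Import Coquelicot.
Open Scope R_scope.

Lemma cos_periodZ x n : cos (x + 2 * IZR n * PI) = cos x.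
Proof.
  destruct (Z_le_gt_dec 0 n) as [H|H].
  - rewrite <- (Z2Nat.id n H), <- INR_IZR_INZ. apply cos_period.
  - assert (E : n = (- Z.of_nat (Z.to_nat (- n)))%Z) by lia.
    rewrite E, opp_IZR, <- INR_IZR_INZ.
    rewrite <- (cos_period (x + 2 * - INR (Z.to_nat (- n)) * PI) (Z.to_nat (-n))).
    f_equal; ring.
Qed.

Lemma sin_periodZ x n : sin (x + 2 * IZR n * PI) = sin x.
Proof.
  destruct (Z_le_gt_dec 0 n) as [H|H].
  - rewrite <- (Z2Nat.id n H), <- INR_IZR_INZ. apply sin_period.
  - assert (E : n = (- Z.of_nat (Z.to_nat (- n)))%Z) by lia.
    rewrite E, opp_IZR, <- INR_IZR_INZ.
    rewrite <- (sin_period (x + 2 * - INR (Z.to_nat (- n)) * PI) (Z.to_nat (-n))).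
    f_equal; ring.
Qed.

Lemma m_nonpos c : 0 <= c <= PI -> c * cos c - sin c <= 0.
Proof.
  intros [H0 H1]. destruct (Rle_lt_or_eq_dec 0 c H0) as [Hc|Hc].
  2:{ subst. rewrite sin_0. lra. }
  destruct (MVT_cor2 (fun c => c * cos c - sin c) (fun c => - c * sin c) 0 c Hc)
    as [d [Hd1 Hd2]].
  { intros y _. apply is_derive_Reals. auto_derive; auto. ring. }
  rewrite cos_0, sin_0 in Hd1.
  assert (0 <= sin d) by (apply sin_ge_0; lra).
  assert (0 <= d * sin d * c) by (apply Rmult_le_pos; [apply Rmult_le_pos|]; lra).
  nra.
Qed.

Lemma S_decr x y : 0 < x -> x <= y -> y <= PI -> x * sin y <= y * sin x.
Proof.
  intros Hx Hxy Hy. destruct (Rle_lt_or_eq_dec x y Hxy) as [H|H].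
  2:{ subst; lra. }
  destruct (MVT_cor2 (fun c => sin c / c) (fun c => (c * cos c - sin c) / (c*c)) x y H)
    as [d [Hd1 Hd2]].
  { intros z Hz. apply is_derive_Reals. auto_derive. lra. field. lra. }
  assert (Hm := m_nonpos d ltac:(lra)).
  assert (0 < d*d) by nra.
  assert ((d * cos d - sin d) / (d * d) <= 0).
  { unfold Rdiv. apply Rmult_le_0_r; [lra|]. left; apply Rinv_0_lt_compat; lra. }
  assert (sin y / y <= sin x / x) by nra.
  apply (Rmult_le_compat_r (x*y)) in H2; [|nra].
  replace (sin y / y * (x*y)) with (x * sin y) in H2 by (field; lra).
  replace (sin x / x * (x*y)) with (y * sin x) in H2 by (field; lra).
  lra.
Qed.

Lemma one_minus_cos y : 1 - cos y <= y^2/2.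
Proof.
  assert (G : forall y, 0 < y -> 1 - cos y <= y^2/2).
  { intros z Hz.
    destruct (MVT_cor2 (fun c => c^2/2 + cos c) (fun c => c - sin c) 0 z Hz)
      as [d [Hd1 Hd2]].
    { intros u _. apply is_derive_Reals. auto_derive; auto. simpl; field. }
    rewrite cos_0 in Hd1. assert (sin d < d) by (apply sin_lt_x; lra). nra. }
  destruct (Rtotal_order y 0) as [H|[H|H]].
  - rewrite <- cos_neg. replace (y^2) with ((-y)^2) by ring. apply G; lra.
  - subst. rewrite cos_0. lra.
  - apply G; lra.
Qed.

Lemma key_pos v x : 0 < v <= PI ->
  cos v - cos x <= sin v / v / 2 * (x^2 - v^2).
Proof.
  intros Hv. set (c := sin v / v).
  assert (Hc0 : 0 <= c).
  { unfold c. unfold Rdiv. apply Rmult_le_pos. apply sin_ge_0; lra.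
    left; apply Rinv_0_lt_compat; lra. }
  assert (Hcv : sin v = c * v) by (unfold c; field; lra).
  set (k := fun x => c * x^2 / 2 + cos x).
  assert (Hk : forall a b, a < b -> exists d, k b - k a = (c * d - sin d) * (b - a) /\ a < d < b).
  { intros a b Hab. apply (MVT_cor2 k (fun d => c * d - sin d) a b Hab).
    intros u _. apply is_derive_Reals. unfold k. auto_derive; auto. simpl; field. }
  assert (Hneg : forall x, 0 <= x <= v -> k v <= k x).
  { intros z Hz. destruct (Rle_lt_or_eq_dec z v (proj2 Hz)) as [H|H]; [|subst; lra].
    destruct (Hk z v H) as [d [E Hd]].
    assert (d * sin v <= v * sin d) by (apply S_decr; lra).
    assert (c * d - sin d <= 0).
    { rewrite Hcv in H0. nra. }
    nra. }
  assert (Hpos : forall x, v <= x <= PI -> k v <= k x).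
  { intros z Hz. destruct (Rle_lt_or_eq_dec v z (proj1 Hz)) as [H|H]; [|subst; lra].
    destruct (Hk v z H) as [d [E Hd]].
    assert (v * sin d <= d * sin v) by (apply S_decr; lra).
    assert (c * d - sin d >= 0).
    { rewrite Hcv in H0. nra. }
    nra. }
  assert (Hnn : forall x, 0 <= x -> k v <= k x).
  { intros z Hz. destruct (Rle_dec z v). apply Hneg; lra.
    destruct (Rle_dec z PI). apply Hpos; lra.
    assert (k v <= k PI) by (apply Hpos; lra).
    unfold k in *. rewrite cos_PI in H.
    assert (-1 <= cos z) by (apply COS_bound).
    assert (c * PI^2 <= c * z^2) by (apply Rmult_le_compat_l; nra).
    lra. }
  assert (k v <= k x).
  { destruct (Rle_dec 0 x). apply Hnn; lra.
    replace (k x) with (k (-x)) by (unfold k; cbv beta; rewrite cos_neg; replace ((-x)^2) with (x^2) by (simpl; ring); reflexivity).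
    apply Hnn; lra. }
  unfold k in H. lra.
Qed.

Lemma key v x : -PI <= v <= PI -> v <> 0 ->
  cos v - cos x <= sin v / v / 2 * (x^2 - v^2).
Proof.
  intros Hv Hv0. destruct (Rle_dec 0 v).
  - apply key_pos; lra.
  - assert (H := key_pos (-v) (-x) ltac:(lra)).
    rewrite !cos_neg, sin_neg in H.
    replace (- sin v / - v) with (sin v / v) in H by (field; lra).
    replace ((-x)^2 - (-v)^2) with (x^2 - v^2) in H by ring. exact H.
Qed.

Lemma wden_decomp t phi th : 0 < t -> exists n : Z,
  -PI <= 2*t*wden t phi th < PI /\ 2*th*t - phi = 2*t*wden t phi th + 2 * IZR n * PI.
Proof.
  intros Ht. unfold wden, Rmod.
  set (a := th - phi / (2 * t) + PI / (2 * t)).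
  set (p := 2 * PI / (2 * t)).
  exists (Int_part (a / p)).
  destruct (base_Int_part (a/p)) as [H1 H2].
  set (n := IZR (Int_part (a/p))) in *.
  assert (Hp : p = PI / t) by (unfold p; field; lra).
  assert (0 < p) by (rewrite Hp; apply Rdiv_lt_0_compat; [apply PI_RGT_0|lra]).
  assert (p * n <= a) by (apply (Rmult_le_compat_l p) in H1; [|lra];
     replace (p * (a/p)) with a in H1 by (field; lra); lra).
  assert (a < p * n + p) by (assert (a/p < n + 1) by lra;
     apply (Rmult_lt_compat_l p) in H3; [|lra];
     replace (p * (a/p)) with a in H3 by (field; lra); lra).
  rewrite Hp in *. unfold a in *.
  split; [split|].
  - apply (Rmult_le_compat_l (2*t)) in H0; [|lra].
    replace (2 * t * (PI / t * n)) with (2*PI*n) in H0 by (field; lra).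
    replace (2 * t * (th - phi / (2 * t) + PI / (2 * t))) with (2*t*th - phi + PI) in H0 by (field; lra).
    replace (2 * t * (th - phi / (2 * t) + PI / (2 * t) - PI / t * n - PI / (2 * t)))
      with (2*t*th - phi - 2*PI*n) by (field; lra). lra.
  - apply (Rmult_lt_compat_l (2*t)) in H3; [|lra].
    replace (2 * t * (PI / t * n + PI / t)) with (2*PI*n + 2*PI) in H3 by (field; lra).
    replace (2 * t * (th - phi / (2 * t) + PI / (2 * t))) with (2*t*th - phi + PI) in H3 by (field; lra).
    replace (2 * t * (th - phi / (2 * t) + PI / (2 * t) - PI / t * n - PI / (2 * t)))
      with (2*t*th - phi - 2*PI*n) by (field; lra). lra.
  - field. lra.
Qed.

Lemma part1 r t phi b theta' : 0 <= r -> 0 < t ->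
     (wden t phi theta' <> 0 \/ in_minset t phi theta') ->
     qmaj r t phi b theta' theta' = fcos r t phi b theta' /\
     (forall theta : R, qmaj r t phi b theta' theta >= fcos r t phi b theta).
Proof.
  intros Hr Ht Hw. split.
  { unfold qmaj. replace (theta' - theta') with 0 by ring. simpl. ring. }
  intros theta. unfold qmaj, wcurv, fcos, fcos'.
  destruct (excluded_middle_informative (in_minset t phi theta')) as [[m Hm]|Hm].
  - assert (E1 : 2 * theta' * t - phi = 0 + 2 * IZR m * PI) by (rewrite Hm; field; lra).
    assert (E2 : 2 * theta * t - phi = 2*t*(theta - theta') + 2 * IZR m * PI) by (rewrite Hm; field; lra).
    rewrite E1, E2, cos_periodZ, sin_periodZ, cos_periodZ, cos_0, sin_0.
    assert (H := one_minus_cos (2 * t * (theta - theta'))).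
    assert (r * (1 - cos (2 * t * (theta - theta'))) <= r * ((2 * t * (theta - theta'))^2/2))
      by (apply Rmult_le_compat_l; auto).
    simpl in *. nra.
  - destruct Hw as [Hw|Hw]; [|contradiction].
    destruct (wden_decomp t phi theta' Ht) as [n [Hv E1]].
    set (v := 2 * t * wden t phi theta') in *.
    assert (Hwv : wden t phi theta' = v / (2*t)) by (unfold v; field; lra).
    rewrite Hwv.
    assert (Hv0 : v <> 0) by (intro; apply Hw; rewrite Hwv, H; field; lra).
    set (x := 2 * theta * t - phi - 2 * IZR n * PI).
    assert (E2 : 2 * theta * t - phi = x + 2 * IZR n * PI) by (unfold x; ring).
    assert (Ed : theta - theta' = (x - v)/(2*t)) by (unfold x; apply (Rmult_eq_reg_l (2*t)); [|lra]; replace (2*t*((2 * theta * t - phi - 2 * IZR n * PI - v) / (2 * t))) with (2 * theta * t - phi - 2 * IZR n * PI - v) by (field; lra); lra).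
    rewrite E1, E2, Ed, cos_periodZ, sin_periodZ, cos_periodZ.
    assert (K := key v x ltac:(lra) Hv0).
    apply (Rmult_le_compat_l r) in K; [|lra].
    replace (/ 2 * (2 * r * t * sin v / (v / (2 * t))) * ((x - v) / (2 * t)) ^ 2)
      with (r * (sin v / v / 2) * (x-v)^2) by (field; lra).
    replace (2 * r * t * sin v * ((x - v) / (2 * t))) with (r * sin v * (x - v)) by (field; lra).
    assert (r * (sin v / v / 2 * (x ^ 2 - v ^ 2)) = r * (sin v / v / 2) * (x-v)^2 + r * sin v * (x - v))
      by (field; lra).
    lra.
Qed.
Lemma sumL_le (l : list nat) (g h : nat -> R) : (forall i, In i l -> g i <= h i) ->
  fold_right Rplus 0 (map g l) <= fold_right Rplus 0 (map h l).
Proof.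
  induction l; simpl; intros H. lra.
  assert (g a <= h a) by auto. assert (fold_right Rplus 0 (map g l) <= fold_right Rplus 0 (map h l)) by auto.
  lra.
Qed.

Lemma sumL_lin (l : list nat) (a b c : nat -> R) (d : R) :
  fold_right Rplus 0 (map (fun i => a i + b i * d + / 2 * c i * d ^ 2) l) =
  fold_right Rplus 0 (map a l) + fold_right Rplus 0 (map b l) * d
  + / 2 * fold_right Rplus 0 (map c l) * d ^ 2.
Proof. induction l as [|x l IH]; cbn [map fold_right]. ring. rewrite IH. ring. Qed.

Theorem mainTheorem3 :
  (forall r t phi b theta' : R, 0 <= r -> 0 < t ->
     (wden t phi theta' <> 0 \/ in_minset t phi theta') ->
     qmaj r t phi b theta' theta' = fcos r t phi b theta' /\
     (forall theta : R, qmaj r t phi b theta' theta >= fcos r t phi b theta))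
  /\
  (forall (T : nat) (r t phi b : nat -> R) (theta' : R),
     (forall i, (i < T)%nat -> 0 <= r i /\ 0 < t i) ->
     (forall i, (i < T)%nat -> wden (t i) (phi i) theta' <> 0 \/ in_minset (t i) (phi i) theta') ->
     sumR T (fun i => wcurv (r i) (t i) (phi i) theta') > 0 ->
     let thetap := theta' - sumR T (fun i => fcos' (r i) (t i) (phi i) theta')
                            / sumR T (fun i => wcurv (r i) (t i) (phi i) theta') in
     sumR T (fun i => fcos (r i) (t i) (phi i) (b i) thetap)
       <= sumR T (fun i => fcos (r i) (t i) (phi i) (b i) theta')).
Proof.
  split. exact part1.
  intros T r t phi b theta' H1 H2 HW thetap.
  set (W := sumR T (fun i => wcurv (r i) (t i) (phi i) theta')) in *.
  set (F' := sumR T (fun i => fcos' (r i) (t i) (phi i) theta')) in *.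
  assert (Hle : sumR T (fun i => fcos (r i) (t i) (phi i) (b i) thetap) <=
     sumR T (fun i => qmaj (r i) (t i) (phi i) (b i) theta' thetap)).
  { unfold sumR. apply sumL_le. intros i Hi. apply in_seq in Hi.
    destruct (H1 i ltac:(lia)). destruct (part1 (r i) (t i) (phi i) (b i) theta' H H0 (H2 i ltac:(lia))) as [_ K].
    specialize (K thetap). lra. }
  unfold qmaj in Hle. unfold sumR in Hle.
  rewrite (sumL_lin _ (fun i => fcos (r i) (t i) (phi i) (b i) theta') (fun i => fcos' (r i) (t i) (phi i) theta') (fun i => wcurv (r i) (t i) (phi i) theta') (thetap - theta')) in Hle.
  change (fold_right Rplus 0 (map (fun i => fcos' (r i) (t i) (phi i) theta') (seq 0 T))) with F' in Hle.
  change (fold_right Rplus 0 (map (fun i => wcurv (r i) (t i) (phi i) theta') (seq 0 T))) with W in Hle.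
  assert (E : F' * (thetap - theta') + / 2 * W * (thetap - theta') ^ 2 = - F'^2 / (2 * W)).
  { unfold thetap. field. lra. }
  assert (0 <= F'^2 / (2*W)).
  { apply Rdiv_le_0_compat; [nra|lra]. }
  unfold sumR. lra.
Qed.
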